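(* Let $\lambda\in(\frac16,\frac56)$. There is a constant $C>0$ (depending only on $\lambda$) such that for every $n\ge0$ and all $x,y\in[0,1]$ with $x\notin\mathcal E$ and $\frac1{12}\ell_n(x)\le|x-y|\le\frac12\ell_n(x)$, $$|F^\lambda(x)-F^\lambda(y)|\le C(|m_n(x)|+1)|x-y|.$$
   Context: Construction: $F^\lambda_0\equiv0$ on $[0,1]$. Given $F^\lambda_n$ with its $4^n$ closed intervals of generation $n$ (covering $[0,1]$, disjoint interiors, $F^\lambda_n$ affine on each), on each interval $[a,b]$ of generation $n$, with $\ell=b-a$ and slope $m$, $F^\lambda_{n+1}$ coincides with $F^\lambda_n$ at $a,a+\ell/3,a+2\ell/3,b$, equals $F^\lambda_n(a+\ell/2)+\lambda\ell\sqrt{1+m^2}$ at $a+\ell/2$, and is affine on $[a,a+\ell/3],[a+\ell/3,a+\ell/2],[a+\ell/2,a+2\ell/3],[a+2\ell/3,b]$. $F^\lambda=\lim_nF^\lambda_n$ (finite for $\lambda\in(\frac16,\frac56)$). Dynamics: $T(x)=3x$ on $[0,\frac13)$, $6x-2$ on $[\frac13,\frac12)$, $4-6x$ on $[\frac12,\frac23)$, $3x-2$ on $[\frac23,1]$; $U(x)=0,1,2,3$ on these intervals respectively; $u_n(x)=U(T^nx)$; $\beta_{0,3}(x,n)=\#\{k<n:u_k(x)\in\{0,3\}\}$, $\beta_{1,2}(x,n)=\#\{k<n:u_k(x)\in\{1,2\}\}$; $\ell_n(x)=3^{-\beta_{0,3}(x,n)}6^{-\beta_{1,2}(x,n)}$.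 $\mathcal E$ is the set of $x$ whose digit sequence $(u_n(x))$ is eventually constantly $0$ or eventually constantly $3$; for $x\notin\mathcal E$, $m_n(x)$ is the slope of $F^\lambda_n$ at $x$. *)

(* Defs.v *)
From Stdlib Require Import Reals Lra List.
From Coquelicot Require Import Coquelicot.
Import ListNotations.
Open Scope R_scope.

(** F^lambda_n is represented by the list of its 4^n + 1 breakpoints
    (x_i, F^lambda_n(x_i)), sorted by increasing x_i, with x_0 = 0 and
    x_{4^n} = 1; F^lambda_n is the affine interpolation between them. *)

Definition refine_seg (lam a fa b fb : R) : list (R * R) :=
  let l := b - a in
  let m := (fb - fa) / l in
  [ (a + l / 3, fa + m * (l / 3));
    (a + l / 2, fa + m * (l / 2) + lam * l * sqrt (1 + m ^ 2));
    (a + 2 * l / 3, fa + m * (2 * l / 3));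
    (b, fb) ].

Fixpoint refine_tail (lam : R) (p : R * R) (l : list (R * R)) : list (R * R) :=
  match l with
  | [] => []
  | q :: l' => refine_seg lam (fst p) (snd p) (fst q) (snd q) ++ refine_tail lam q l'
  end.

Definition refine (lam : R) (l : list (R * R)) : list (R * R) :=
  match l with
  | [] => []
  | p :: l' => p :: refine_tail lam p l'
  end.

Fixpoint nodes (lam : R) (n : nat) : list (R * R) :=
  match n with
  | O => [ (0, 0); (1, 0) ]
  | S n' => refine lam (nodes lam n')
  end.

Fixpoint interp (l : list (R * R)) (x : R) : R :=
  match l with
  | p :: ((q :: _) as l') =>
      if Rle_dec x (fst q)
      then snd p + (snd q - snd p) / (fst q - fst p) * (x - fst p)
      else interp l' x
  | _ => 0
  end.

Fixpoint slope_of (l : list (R * R)) (x : R) : R :=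
  match l with
  | p :: ((q :: _) as l') =>
      if Rle_dec x (fst q)
      then (snd q - snd p) / (fst q - fst p)
      else slope_of l' x
  | _ => 0
  end.

Definition Fn (lam : R) (n : nat) (x : R) : R := interp (nodes lam n) x.

Definition Flam (lam : R) (x : R) : R := real (Lim_seq (fun n => Fn lam n x)).

(** m_n(x): slope of F^lambda_n at x (meaningful for x not in E, where x is
    never a breakpoint). *)
Definition mslope (lam : R) (n : nat) (x : R) : R := slope_of (nodes lam n) x.

Definition Tmap (x : R) : R :=
  if Rlt_dec x (1/3) then 3 * x
  else if Rlt_dec x (1/2) then 6 * x - 2
  else if Rlt_dec x (2/3) then 4 - 6 * x
  else 3 * x - 2.

Definition Umap (x : R) : nat :=
  if Rlt_dec x (1/3) then 0%nat
  else if Rlt_dec x (1/2) then 1%nat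
  else if Rlt_dec x (2/3) then 2%nat
  else 3%nat.

Definition udigit (x : R) (n : nat) : nat := Umap (Nat.iter n Tmap x).

Fixpoint beta03 (x : R) (n : nat) : nat :=
  match n with
  | O => O
  | S k => (beta03 x k + (if orb (Nat.eqb (udigit x k) 0) (Nat.eqb (udigit x k) 3)
                           then 1 else 0))%nat
  end.

Fixpoint beta12 (x : R) (n : nat) : nat :=
  match n with
  | O => O
  | S k => (beta12 x k + (if orb (Nat.eqb (udigit x k) 1) (Nat.eqb (udigit x k) 2)
                           then 1 else 0))%nat
  end.

Definition ell (x : R) (n : nat) : R :=
  / (3 ^ beta03 x n) * / (6 ^ beta12 x n).

Definition inE (x : R) : Prop :=
  exists (c N : nat), (c = 0%nat \/ c = 3%nat) /\
    forall k, (N <= k)%nat -> udigit x k = c.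

(* Main.v *)
Require Import Defs.
From Stdlib Require Import Reals.
From Coquelicot Require Import Coquelicot.
From Stdlib Require Import Lra Lia List.
Import Defs.
Import ListNotations.
Open Scope R_scope.

Definition lin (p q : R*R) (u:R) := snd p + (snd q - snd p) / (fst q - fst p) * (u - fst p).
Definition sl (p q : R*R) := (snd q - snd p) / (fst q - fst p).

Inductive Adj : list (R*R) -> R*R -> R*R -> Prop :=
| Adj_here p q l : Adj (p::q::l) p q
| Adj_there r l p q : Adj l p q -> Adj (r::l) p q.

Inductive Adj3 : list (R*R) -> R*R -> R*R -> R*R -> Prop :=
| Adj3_here o p q l : Adj3 (o::p::q::l) o p q
| Adj3_there r l o p q : Adj3 l o p q -> Adj3 (r::l) o p q.

Definition RR lam k L := Nat.iter k (refine lam) L.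
Lemma iter_S {A} (f : A -> A) k x : Nat.iter (S k) f x = f (Nat.iter k f x).
Proof. reflexivity. Qed.
Lemma iter_Sr {A} (f : A -> A) k : forall x, Nat.iter (S k) f x = Nat.iter k f (f x).
Proof. induction k; intros; auto. rewrite iter_S, IHk. reflexivity. Qed.

Definition lst (L : list (R*R)) := last L (0,0).

Lemma rt_cons lam p q l : refine_tail lam p (q::l) = refine_seg lam (fst p) (snd p) (fst q) (snd q) ++ refine_tail lam q l.
Proof. reflexivity. Qed.

Lemma G1 lam l1 : forall p l2,
  refine_tail lam p (l1 ++ l2) = refine_tail lam p l1 ++ refine_tail lam (last (p::l1) (0,0)) l2.
Proof.
  induction l1 as [|q l1 IH]; intros p l2. reflexivity.
  rewrite <- app_comm_cons, !rt_cons, IH, app_assoc. reflexivity.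
Qed.

Lemma GL lam x0 X' y Y' :
  last (x0::X') (0,0) = y ->
  refine lam ((x0::X') ++ Y') = refine lam (x0::X') ++ tl (refine lam (y::Y')).
Proof.
  intros H. simpl. rewrite G1, H. reflexivity.
Qed.

Lemma RR_head lam k : forall x0 L, exists T, RR lam k (x0::L) = x0 :: T.
Proof.
  induction k; intros x0 L. exists L; reflexivity.
  destruct (IHk x0 L) as [T HT]. unfold RR in *. rewrite iter_S, HT.
  eexists; reflexivity.
Qed.

Lemma last_app_ne (A:Type) (l1 l2 : list A) d : l2 <> [] -> last (l1 ++ l2) d = last l2 d.
Proof.
  induction l1; intros H; simpl; auto.
  rewrite IHl1 by auto. destruct l1; simpl; auto. destruct l2; [congruence|auto].
Qed.

Lemma last_rt lam l : forall p, l <> [] -> last (refine_tail lam p l) (0,0) = last l (0,0).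
Proof.
  induction l as [|q l IH]; intros p H; [congruence|]. rewrite rt_cons.
  destruct l as [|r l].
  - simpl. destruct q; reflexivity.
  - rewrite last_app_ne. rewrite IH by congruence. reflexivity.
    destruct l; simpl; unfold refine_seg; simpl; congruence.
Qed.

Lemma last_refine lam L : last (refine lam L) (0,0) = last L (0,0).
Proof.
  destruct L as [|p l]; auto. destruct l as [|q l]. reflexivity.
  change (refine lam (p::q::l)) with (p :: refine_tail lam p (q::l)).
  change (last (p :: q :: l) (0,0)) with (last (q :: l) (0,0)).
  rewrite <- (last_rt lam (q::l) p) by congruence.
  rewrite rt_cons. unfold refine_seg. reflexivity.
Qed.

Lemma RR_last lam k L : last (RR lam k L) (0,0) = last L (0,0).
Proof.
  induction k; auto. unfold RR in *; rewrite iter_S, last_refine; auto.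
Qed.

Lemma RR_glue lam k : forall x0 X' y Y',
  last (x0::X') (0,0) = y ->
  RR lam k ((x0::X') ++ Y') = RR lam k (x0::X') ++ tl (RR lam k (y::Y')).
Proof.
  induction k; intros x0 X' y Y' H. simpl. subst; reflexivity.
  unfold RR in *; rewrite !iter_S. rewrite IHk with (y:=y) by auto.
  destruct (RR_head lam k x0 X') as [T HT]. unfold RR in HT. rewrite HT.
  destruct (RR_head lam k y Y') as [T2 HT2]. unfold RR in HT2. rewrite HT2.
  simpl tl. rewrite GL with (y:=y). reflexivity.
  rewrite <- HT. rewrite <- H. apply (RR_last lam k (x0::X')).
Qed.

Lemma Adj_app_l L M p q : Adj L p q -> Adj (L ++ M) p q.
Proof. induction 1; simpl; constructor; auto. Qed.

Lemma Adj_glue_r x0 X' y Y' p q : last (x0::X') (0,0) = y -> Adj (y::Y') p q -> Adj ((x0::X') ++ Y') p q.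
Proof.
  revert x0. induction X' as [|x1 X'' IH]; intros x0 Hl H.
  - simpl in Hl. subst. exact H.
  - change ((x0 :: x1 :: X'') ++ Y') with (x0 :: ((x1::X'') ++ Y')). constructor.
    apply IH; auto.
Qed.

Lemma Adj_cons_inv r l p q : Adj (r::l) p q -> (r = p /\ exists l', l = q::l') \/ Adj l p q.
Proof. intros H; inversion H; subst; eauto. Qed.
Lemma Adj3_cons_inv r l o p q : Adj3 (r::l) o p q -> (r = o /\ exists l', l = p::q::l') \/ Adj3 l o p q.
Proof. intros H; inversion H; subst; eauto. Qed.

Lemma Adj_glue_inv x0 X' y Y' p q : last (x0::X') (0,0) = y -> Adj ((x0::X') ++ Y') p q ->
  Adj (x0::X') p q \/ Adj (y::Y') p q.
Proof.
  revert x0. induction X' as [|x1 X'' IH]; intros x0 Hl H.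
  - simpl in Hl. subst. right. exact H.
  - change ((x0 :: x1 :: X'') ++ Y') with (x0 :: (x1 :: X'' ++ Y')) in H.
    assert (Hl' : last (x1 :: X'') (0,0) = y) by exact Hl.
    destruct (Adj_cons_inv _ _ _ _ H) as [[E [l' E']]|HA].
    + injection E'; intros; subst. left. constructor.
    + destruct (IH x1 Hl' HA) as [H'|H']. left; constructor; auto. right; auto.
Qed.

Lemma Adj3_glue_inv x0 X' y Y' o p q : last (x0::X') (0,0) = y -> Adj3 ((x0::X') ++ Y') o p q ->
  Adj3 (x0::X') o p q \/ Adj3 (y::Y') o p q \/
  (p = y /\ Adj (x0::X') o p /\ exists Y'', Y' = q :: Y'').
Proof.
  revert x0. induction X' as [|x1 X'' IH]; intros x0 Hl H.
  - simpl in Hl. subst. right; left. exact H.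
  - change ((x0 :: x1 :: X'') ++ Y') with (x0 :: (x1 :: X'' ++ Y')) in H.
    assert (Hl' : last (x1 :: X'') (0,0) = y) by exact Hl.
    destruct (Adj3_cons_inv _ _ _ _ _ H) as [[E [l' E']]|HA].
    + injection E'; intros E2 E3; subst. destruct X'' as [|x2 X3].
      * simpl in Hl'. subst. right; right. split; auto. split. constructor.
        simpl in E2. eauto.
      * simpl in E2. injection E2; intros; subst. left. constructor.
    + destruct (IH x1 Hl' HA) as [H'|[H'|[H1' [H2' H3']]]].
      left; constructor; auto. right; left; auto. right; right; split; auto. split; auto. constructor; auto.
Qed.

Definition P1 (lam : R) (A B : R*R) :=
  let l := fst B - fst A in let m := (snd B - snd A) / l in
  (fst A + l / 3, snd A + m * (l / 3)).
Definition P2 lam (A B : R*R) :=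
  let l := fst B - fst A in let m := (snd B - snd A) / l in
  (fst A + l / 2, snd A + m * (l / 2) + lam * l * sqrt (1 + m ^ 2)).
Definition P3 (lam : R) (A B : R*R) :=
  let l := fst B - fst A in let m := (snd B - snd A) / l in
  (fst A + 2 * l / 3, snd A + m * (2 * l / 3)).

Definition Q lam A B (i : nat) : R*R :=
  match i with 0 => A | 1 => P1 lam A B | 2 => P2 lam A B | 3 => P3 lam A B | _ => B end.

Lemma refine2 lam A B : refine lam [A;B] = [A; P1 lam A B; P2 lam A B; P3 lam A B; B].
Proof. destruct A, B. reflexivity. Qed.

Lemma split_RR lam k A B : RR lam (S k) [A;B] =
  RR lam k [A; P1 lam A B] ++ tl (RR lam k [P1 lam A B; P2 lam A B] ++
   tl (RR lam k [P2 lam A B; P3 lam A B] ++ tl (RR lam k [P3 lam A B; B]))).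
Proof.
  assert (E : RR lam (S k) [A;B] = RR lam k (refine lam [A;B])) by (unfold RR; apply iter_Sr).
  rewrite E, refine2.
  change [A; P1 lam A B; P2 lam A B; P3 lam A B; B] with ([A; P1 lam A B] ++ [P2 lam A B; P3 lam A B; B]).
  rewrite RR_glue with (y := P1 lam A B) by reflexivity.
  change (P1 lam A B :: [P2 lam A B; P3 lam A B; B]) with ([P1 lam A B; P2 lam A B] ++ [P3 lam A B; B]).
  rewrite RR_glue with (y := P2 lam A B) by reflexivity.
  change (P2 lam A B :: [P3 lam A B; B]) with ([P2 lam A B; P3 lam A B] ++ [B]).
  rewrite RR_glue with (y := P3 lam A B) by reflexivity.
  reflexivity.
Qed.

Lemma last_glue x0 X' y Y' : last (x0::X') (0,0) = y -> last ((x0::X') ++ Y') (0,0) = last (y::Y') (0,0).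
Proof.
  intros H. destruct Y' as [|z Z]. rewrite app_nil_r. auto.
  rewrite last_app_ne by congruence. reflexivity.
Qed.

Lemma RR_head2 lam k : forall X t L, exists t' T, RR lam k (X::t::L) = X :: t' :: T.
Proof.
  induction k; intros X t L. exists t, L; reflexivity.
  destruct (IHk X t L) as [t' [T HT]]. unfold RR in *. rewrite iter_S, HT.
  change (refine lam (X :: t' :: T)) with (X :: refine_tail lam X (t'::T)).
  rewrite rt_cons. unfold refine_seg. simpl. eauto.
Qed.

Lemma RR2 lam k X Y : exists T, RR lam k [X;Y] = X :: T /\ last (X::T) (0,0) = Y /\
   exists t T', T = t :: T'.
Proof.
  destruct (RR_head2 lam k X Y []) as [t [T HT]]. exists (t::T). split; auto.
  split. rewrite <- HT, RR_last. reflexivity. eauto.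
Qed.

Lemma comp_adj lam k A B p q : Adj (RR lam (S k) [A;B]) p q ->
  exists i, (i < 4)%nat /\ Adj (RR lam k [Q lam A B i; Q lam A B (S i)]) p q.
Proof.
  rewrite split_RR.
  destruct (RR2 lam k A (P1 lam A B)) as [T0 [E0 [L0 N0]]].
  destruct (RR2 lam k (P1 lam A B) (P2 lam A B)) as [T1 [E1 [L1 N1]]].
  destruct (RR2 lam k (P2 lam A B) (P3 lam A B)) as [T2 [E2 [L2 N2]]].
  destruct (RR2 lam k (P3 lam A B) B) as [T3 [E3 [L3 N3]]].
  rewrite E0, E1, E2, E3. simpl tl. intros H.
  destruct (Adj_glue_inv _ _ _ _ _ _ L0 H) as [H0|H0].
  exists 0%nat; split; [lia|]. simpl. rewrite E0; auto.
  destruct (Adj_glue_inv _ _ _ _ _ _ L1 H0) as [H1|H1].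
  exists 1%nat; split; [lia|]. simpl. rewrite E1; auto.
  destruct (Adj_glue_inv _ _ _ _ _ _ L2 H1) as [H2|H2].
  exists 2%nat; split; [lia|]. simpl. rewrite E2; auto.
  exists 3%nat; split; [lia|]. simpl. rewrite E3; auto.
Qed.

Lemma comp_adj_back lam k A B p q i : (i < 4)%nat ->
  Adj (RR lam k [Q lam A B i; Q lam A B (S i)]) p q -> Adj (RR lam (S k) [A;B]) p q.
Proof.
  rewrite split_RR.
  destruct (RR2 lam k A (P1 lam A B)) as [T0 [E0 [L0 N0]]].
  destruct (RR2 lam k (P1 lam A B) (P2 lam A B)) as [T1 [E1 [L1 N1]]].
  destruct (RR2 lam k (P2 lam A B) (P3 lam A B)) as [T2 [E2 [L2 N2]]].
  destruct (RR2 lam k (P3 lam A B) B) as [T3 [E3 [L3 N3]]].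
  rewrite E0, E1, E2, E3. simpl tl. intros Hi H.
  destruct i as [|[|[|[|i]]]]; simpl in H; try lia.
  - rewrite E0 in H. apply (Adj_app_l (_::_)); auto.
  - rewrite E1 in H. apply (Adj_glue_r A T0 (P1 lam A B)); auto. apply (Adj_app_l (_::_)); auto.
  - rewrite E2 in H. apply (Adj_glue_r A T0 (P1 lam A B)); auto.
    apply (Adj_glue_r _ T1 (P2 lam A B)); auto. apply (Adj_app_l (_::_)); auto.
  - rewrite E3 in H. apply (Adj_glue_r A T0 (P1 lam A B)); auto.
    apply (Adj_glue_r _ T1 (P2 lam A B)); auto.
    apply (Adj_glue_r _ T2 (P3 lam A B)); auto.
Qed.

Lemma comp_adj3 lam k A B o p q : Adj3 (RR lam (S k) [A;B]) o p q ->
  (exists i, (i < 4)%nat /\ Adj3 (RR lam k [Q lam A B i; Q lam A B (S i)]) o p q) \/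
  (exists i, (i < 3)%nat /\ p = Q lam A B (S i) /\
     Adj (RR lam k [Q lam A B i; Q lam A B (S i)]) o p /\
     Adj (RR lam k [Q lam A B (S i); Q lam A B (S (S i))]) p q).
Proof.
  rewrite split_RR.
  destruct (RR2 lam k A (P1 lam A B)) as [T0 [E0 [L0 N0]]].
  destruct (RR2 lam k (P1 lam A B) (P2 lam A B)) as [T1 [E1 [L1 N1]]].
  destruct (RR2 lam k (P2 lam A B) (P3 lam A B)) as [T2 [E2 [L2 N2]]].
  destruct (RR2 lam k (P3 lam A B) B) as [T3 [E3 [L3 N3]]].
  rewrite E0, E1, E2, E3. simpl tl. intros H.
  destruct (Adj3_glue_inv _ _ _ _ _ _ _ L0 H) as [H0|[H0|[Ep [Ha [Y'' Hb]]]]].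
  left; exists 0%nat; split; [lia|]. simpl. rewrite E0; auto.
  2:{ right. exists 0%nat. split; [lia|]. simpl. rewrite E0, E1. split; auto. split; auto.
      destruct N1 as [t [T' ->]]. simpl in Hb. injection Hb; intros; subst. constructor. }
  destruct (Adj3_glue_inv _ _ _ _ _ _ _ L1 H0) as [H1|[H1|[Ep [Ha [Y'' Hb]]]]].
  left; exists 1%nat; split; [lia|]. simpl. rewrite E1; auto.
  2:{ right. exists 1%nat. split; [lia|]. simpl. rewrite E1, E2. split; auto. split; auto.
      destruct N2 as [t [T' ->]]. simpl in Hb. injection Hb; intros; subst. constructor. }
  destruct (Adj3_glue_inv _ _ _ _ _ _ _ L2 H1) as [H2|[H2|[Ep [Ha [Y'' Hb]]]]].
  left; exists 2%nat; split; [lia|]. simpl. rewrite E2; auto.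
  left; exists 3%nat; split; [lia|]. simpl. rewrite E3; auto.
  right. exists 2%nat. split; [lia|]. simpl. rewrite E2, E3. split; auto. split; auto.
  destruct N3 as [t [T' ->]]. simpl in Hb. injection Hb; intros; subst. constructor.
Qed.

Definition AS (L : list (R*R)) := forall p q, Adj L p q -> fst p < fst q.

Lemma AS_tail r l : AS (r::l) -> AS l.
Proof. intros H p q Ha. apply H. constructor; auto. Qed.

Lemma AS_later l : forall q0 p q, AS (q0::l) -> Adj l p q -> fst q0 < fst p.
Proof.
  induction l as [|r l IH]; intros q0 p q HA Ha. inversion Ha.
  destruct (Adj_cons_inv _ _ _ _ Ha) as [[E _]|Ha'].
  - subst. apply HA. constructor.
  - assert (fst q0 < fst r). { apply HA. constructor. }
    assert (fst r < fst p). { apply (IH r p q); auto. eapply AS_tail; eauto. }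
    lra.
Qed.

Lemma interp_cons2 p0 q0 l u : interp (p0::q0::l) u =
  if Rle_dec u (fst q0) then lin p0 q0 u else interp (q0::l) u.
Proof. reflexivity. Qed.
Lemma slope_cons2 p0 q0 l u : slope_of (p0::q0::l) u =
  if Rle_dec u (fst q0) then sl p0 q0 else slope_of (q0::l) u.
Proof. reflexivity. Qed.

Lemma Ex_pair l : forall p0 q0 u, fst p0 <= u <= fst (last (p0::q0::l) (0,0)) ->
  exists p q, Adj (p0::q0::l) p q /\ fst p <= u <= fst q /\
    interp (p0::q0::l) u = lin p q u /\ slope_of (p0::q0::l) u = sl p q.
Proof.
  induction l as [|r l IH]; intros p0 q0 u Hu.
  - exists p0, q0. simpl in Hu. rewrite interp_cons2, slope_cons2.
    destruct (Rle_dec u (fst q0)); [|lra]. repeat split; try lra; constructor.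
  - rewrite interp_cons2, slope_cons2. destruct (Rle_dec u (fst q0)) as [Hle|Hgt].
    + exists p0, q0. repeat split; try lra; constructor.
    + destruct (IH q0 r u) as [p [q [H1 [H2 [H3 H4]]]]].
      split. lra. exact (proj2 Hu).
      exists p, q. repeat split; auto; try lra. constructor; auto.
Qed.

Lemma lin_end p q : fst p <> fst q -> lin p q (fst q) = snd q.
Proof. intros H. unfold lin. field. intro; apply H; lra. Qed.
Lemma lin_start p q u : u = fst p -> lin p q u = snd p.
Proof. intros ->. unfold lin. ring. Qed.

Lemma Uniq L : forall p q u, AS L -> Adj L p q -> fst p <= u <= fst q -> interp L u = lin p q u.
Proof.
  induction L as [|p0 L IH]; intros p q u HA Ha Hu. inversion Ha.
  destruct L as [|q0 l]. inversion Ha. inversion H3.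
  rewrite interp_cons2. destruct (Adj_cons_inv _ _ _ _ Ha) as [[E [l' E']]|Ha'].
  - injection E'; intros; subst. destruct (Rle_dec u (fst q)); [reflexivity|lra].
  - destruct (Rle_dec u (fst q0)) as [Hle|Hgt].
    + destruct (Adj_cons_inv _ _ _ _ Ha') as [[E [l' E']]|Ha''].
      * subst. assert (fst p0 < fst p) by (apply HA; constructor).
        assert (u = fst p) by lra. rewrite (lin_start p q u) by auto.
        replace u with (fst p) by auto. apply lin_end. lra.
      * assert (fst q0 < fst p) by (eapply AS_later; [eapply AS_tail; eauto| eauto]). lra.
    + apply IH; auto. eapply AS_tail; eauto.
Qed.

Lemma Sub L M p0 q0 M' u : AS L -> (forall p q, Adj M p q -> Adj L p q) -> M = p0::q0::M' ->
  fst p0 <= u <= fst (last M (0,0)) -> interp L u = interp M u.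
Proof.
  intros HA HS -> Hu. destruct (Ex_pair M' p0 q0 u Hu) as [p [q [H1 [H2 [H3 H4]]]]].
  rewrite H3. apply Uniq; auto.
Qed.

Inductive Gen : nat -> R -> R -> Prop :=
| G0 : Gen 0 0 1
| Gc0 n c d : Gen n c d -> Gen (S n) (c/3) (d/3)
| Gc1 n c d : Gen n c d -> Gen (S n) (1/3 + c/6) (1/3 + d/6)
| Gc2 n c d : Gen n c d -> Gen (S n) (2/3 - d/6) (2/3 - c/6)
| Gc3 n c d : Gen n c d -> Gen (S n) (2/3 + c/3) (2/3 + d/3).

Lemma Gen_eq n c d c' d' : Gen n c d -> c = c' -> d = d' -> Gen n c' d'.
Proof. intros H -> ->; auto. Qed.

Lemma Gen_bounds n c d : Gen n c d -> 0 <= c /\ c < d /\ d <= 1.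
Proof. induction 1; lra. Qed.

Lemma Gen_refl n c d : Gen n c d -> Gen n (1-d) (1-c).
Proof.
  induction 1.
  - apply (Gen_eq _ _ _ _ _ G0); lra.
  - apply (Gen_eq _ _ _ _ _ (Gc3 _ _ _ IHGen)); lra.
  - apply (Gen_eq _ _ _ _ _ (Gc2 _ _ _ H)); lra.
  - apply (Gen_eq _ _ _ _ _ (Gc1 _ _ _ H)); lra.
  - apply (Gen_eq _ _ _ _ _ (Gc0 _ _ _ IHGen)); lra.
Qed.

Lemma fst_P1 lam A B : fst (P1 lam A B) = fst A + (fst B - fst A) / 3. Proof. reflexivity. Qed.
Lemma fst_P2 lam A B : fst (P2 lam A B) = fst A + (fst B - fst A) / 2. Proof. reflexivity. Qed.
Lemma fst_P3 lam A B : fst (P3 lam A B) = fst A + 2 * (fst B - fst A) / 3. Proof. reflexivity. Qed.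

Lemma Rep lam k : forall A B p q, fst A < fst B -> Adj (RR lam k [A;B]) p q ->
  exists c d, Gen k c d /\ fst p = fst A + (fst B - fst A) * c /\ fst q = fst A + (fst B - fst A) * d.
Proof.
  induction k; intros A B p q Hab H.
  - simpl in H. inversion H; subst. exists 0, 1. split. constructor. split; ring.
    inversion H4. inversion H5.
  - destruct (comp_adj _ _ _ _ _ _ H) as [i [Hi Ha]].
    destruct i as [|[|[|[|i]]]]; try lia; simpl in Ha.
    + eapply IHk in Ha; [destruct Ha as [c [d [G [E1 E2]]]]|rewrite fst_P1; lra].
      exists (c/3), (d/3). split. constructor; auto. rewrite fst_P1 in *. split; [rewrite E1|rewrite E2]; field.
    + eapply IHk in Ha; [destruct Ha as [c [d [G [E1 E2]]]]|rewrite fst_P1, fst_P2; lra].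
      exists (1/3 + c/6), (1/3 + d/6). split. constructor; auto. rewrite fst_P1, fst_P2 in *. split; [rewrite E1|rewrite E2]; field.
    + eapply IHk in Ha; [destruct Ha as [c [d [G [E1 E2]]]]|rewrite fst_P2, fst_P3; lra].
      exists (1/2 + c/6), (1/2 + d/6). split.
      apply (Gen_eq _ _ _ _ _ (Gc2 _ _ _ (Gen_refl _ _ _ G))); lra.
      rewrite fst_P2, fst_P3 in *. split; [rewrite E1|rewrite E2]; field.
    + eapply IHk in Ha; [destruct Ha as [c [d [G [E1 E2]]]]|rewrite fst_P3; lra].
      exists (2/3 + c/3), (2/3 + d/3). split. constructor; auto. rewrite fst_P3 in *. split; [rewrite E1|rewrite E2]; field.
Qed.

Lemma AS_RR lam k A B : fst A < fst B -> AS (RR lam k [A;B]).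
Proof.
  intros Hab p q H. destruct (Rep _ _ _ _ _ _ Hab H) as [c [d [G [E1 E2]]]].
  apply Gen_bounds in G. rewrite E1, E2. nra.
Qed.

Lemma UT0 x : x < 1/3 -> Umap x = 0%nat /\ Tmap x = 3 * x.
Proof. intros H. unfold Umap, Tmap. destruct (Rlt_dec x (1/3)); [auto|lra]. Qed.
Lemma UT1 x : 1/3 <= x < 1/2 -> Umap x = 1%nat /\ Tmap x = 6 * x - 2.
Proof. intros H. unfold Umap, Tmap. destruct (Rlt_dec x (1/3)); [lra|].
  destruct (Rlt_dec x (1/2)); [auto|lra]. Qed.
Lemma UT2 x : 1/2 <= x < 2/3 -> Umap x = 2%nat /\ Tmap x = 4 - 6 * x.
Proof. intros H. unfold Umap, Tmap. destruct (Rlt_dec x (1/3)); [lra|].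
  destruct (Rlt_dec x (1/2)); [lra|]. destruct (Rlt_dec x (2/3)); [auto|lra]. Qed.
Lemma UT3 x : 2/3 <= x -> Umap x = 3%nat /\ Tmap x = 3 * x - 2.
Proof. intros H. unfold Umap, Tmap. destruct (Rlt_dec x (1/3)); [lra|].
  destruct (Rlt_dec x (1/2)); [lra|]. destruct (Rlt_dec x (2/3)); [lra|auto]. Qed.

Lemma udigit_S x k : udigit x (S k) = udigit (Tmap x) k.
Proof. unfold udigit. rewrite iter_Sr. reflexivity. Qed.

Lemma inE_T x : inE (Tmap x) -> inE x.
Proof.
  intros [c [N [Hc H]]]. exists c, (S N). split; auto. intros k Hk.
  destruct k. lia. rewrite udigit_S. apply H. lia.
Qed.

Lemma inE_0 : inE 0.
Proof.
  exists 0%nat, 0%nat. split; auto. intros k _. unfold udigit.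
  assert (Nat.iter k Tmap 0 = 0). { induction k; auto. rewrite iter_S, IHk.
    destruct (UT0 0 ltac:(lra)) as [_ E]. rewrite E; ring. }
  rewrite H. apply (UT0 0 ltac:(lra)).
Qed.

Lemma inE_1 : inE 1.
Proof.
  exists 3%nat, 0%nat. split; auto. intros k _. unfold udigit.
  assert (Nat.iter k Tmap 1 = 1). { induction k; auto. rewrite iter_S, IHk.
    destruct (UT3 1 ltac:(lra)) as [_ E]. rewrite E; ring. }
  rewrite H. apply (UT3 1 ltac:(lra)).
Qed.

Lemma inE_13 : inE (1/3).
Proof. apply inE_T. destruct (UT1 (1/3) ltac:(lra)) as [_ E]. rewrite E.
  replace (6 * (1/3) - 2) with 0 by field. apply inE_0. Qed.
Lemma inE_12 : inE (1/2).
Proof. apply inE_T. destruct (UT2 (1/2) ltac:(lra)) as [_ E]. rewrite E.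
  replace (4 - 6 * (1/2)) with 1 by field. apply inE_1. Qed.
Lemma inE_23 : inE (2/3).
Proof. apply inE_T. destruct (UT3 (2/3) ltac:(lra)) as [_ E]. rewrite E.
  replace (3 * (2/3) - 2) with 0 by field. apply inE_0. Qed.

Definition d03 (k : nat) : nat := if orb (Nat.eqb k 0) (Nat.eqb k 3) then 1%nat else 0%nat.
Definition d12 (k : nat) : nat := if orb (Nat.eqb k 1) (Nat.eqb k 2) then 1%nat else 0%nat.

Lemma beta03_S x n : beta03 x (S n) = (d03 (Umap x) + beta03 (Tmap x) n)%nat.
Proof.
  induction n. simpl. unfold d03, udigit. simpl. destruct (_ || _)%bool; lia.
  change (beta03 x (S (S n))) with (beta03 x (S n) + d03 (udigit x (S n)))%nat.
  rewrite IHn, udigit_S. simpl. unfold d03. lia.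
Qed.
Lemma beta12_S x n : beta12 x (S n) = (d12 (Umap x) + beta12 (Tmap x) n)%nat.
Proof.
  induction n. simpl. unfold d12, udigit. simpl. destruct (_ || _)%bool; lia.
  change (beta12 x (S (S n))) with (beta12 x (S n) + d12 (udigit x (S n)))%nat.
  rewrite IHn, udigit_S. simpl. unfold d12. lia.
Qed.

Lemma ell_S3 x n : Umap x = 0%nat \/ Umap x = 3%nat -> ell x (S n) = / 3 * ell (Tmap x) n.
Proof.
  intros HU. unfold ell. rewrite beta03_S, beta12_S.
  assert (d03 (Umap x) = 1%nat /\ d12 (Umap x) = 0%nat) as [-> ->] by (destruct HU as [-> | ->]; auto).
  rewrite !pow_add. simpl. field. split; apply pow_nonzero; lra.
Qed.
Lemma ell_S6 x n : Umap x = 1%nat \/ Umap x = 2%nat -> ell x (S n) = / 6 * ell (Tmap x) n.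
Proof.
  intros HU. unfold ell. rewrite beta03_S, beta12_S.
  assert (d03 (Umap x) = 0%nat /\ d12 (Umap x) = 1%nat) as [-> ->] by (destruct HU as [-> | ->]; auto).
  rewrite !pow_add. simpl. field. split; apply pow_nonzero; lra.
Qed.

Lemma Gen_ell n c d : Gen n c d -> forall x, c <= x <= d -> ~ inE x -> d - c = ell x n.
Proof.
  induction 1; intros x Hx HE.
  - unfold ell. simpl. rewrite Rinv_1. lra.
  - pose proof (Gen_bounds _ _ _ H).
    assert (x <> 1/3) by (intro; subst; apply HE, inE_13).
    destruct (UT0 x ltac:(lra)) as [U T].
    rewrite ell_S3 by auto. rewrite <- IHGen. lra. rewrite T; lra.
    intro HT; apply HE, inE_T, HT.
  - pose proof (Gen_bounds _ _ _ H).
    assert (x <> 1/2) by (intro; subst; apply HE, inE_12).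
    destruct (UT1 x ltac:(lra)) as [U T].
    rewrite ell_S6 by auto. rewrite <- IHGen. lra. rewrite T; lra.
    intro HT; apply HE, inE_T, HT.
  - pose proof (Gen_bounds _ _ _ H).
    assert (x <> 2/3) by (intro; subst; apply HE, inE_23).
    destruct (UT2 x ltac:(lra)) as [U T].
    rewrite ell_S6 by auto. rewrite <- IHGen. lra. rewrite T; lra.
    intro HT; apply HE, inE_T, HT.
  - pose proof (Gen_bounds _ _ _ H).
    destruct (UT3 x ltac:(lra)) as [U T].
    rewrite ell_S3 by auto. rewrite <- IHGen. lra. rewrite T; lra.
    intro HT; apply HE, inE_T, HT.
Qed.

Lemma sqrt_facts m : Rabs m <= sqrt (1 + m ^ 2) <= 1 + Rabs m /\ 1 <= sqrt (1 + m ^ 2).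
Proof.
  pose proof (sqrt_plus_sqr 1 m) as [H1 _]. replace (1 ^ 2) with 1 in H1 by ring.
  assert (Rabs 1 = 1) by (apply Rabs_pos_eq; lra).
  assert (Rmax (Rabs 1) (Rabs m) >= Rabs m /\ Rmax (Rabs 1) (Rabs m) >= 1).
  { split; [apply Rle_ge, Rmax_r| rewrite <- H at 2; apply Rle_ge, Rmax_l]. }
  split; [split|]; try lra.
  rewrite <- (sqrt_pow2 (1 + Rabs m)) by (pose proof (Rabs_pos m); lra).
  apply sqrt_le_1_alt. pose proof (Rabs_pos m).
  assert (Rabs m * Rabs m = m * m) by (rewrite <- Rabs_mult; apply Rabs_pos_eq; nra).
  nra.
Qed.

Section S.
Variable lam : R.
Hypothesis Hlam : 1/6 < lam < 5/6.

Let sl_AB A B := sl A B.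

Lemma sl_Q0 A B : fst A < fst B -> sl A (P1 lam A B) = sl A B.
Proof. intros H. unfold sl, P1; simpl. field. lra. Qed.
Lemma sl_Q1 A B : fst A < fst B -> sl (P1 lam A B) (P2 lam A B) = sl A B + 6 * lam * sqrt (1 + sl A B ^ 2).
Proof. intros H. unfold sl, P1, P2; simpl. field. lra. Qed.
Lemma sl_Q2 A B : fst A < fst B -> sl (P2 lam A B) (P3 lam A B) = sl A B - 6 * lam * sqrt (1 + sl A B ^ 2).
Proof. intros H. unfold sl, P2, P3; simpl. field. lra. Qed.
Lemma sl_Q3 A B : fst A < fst B -> sl (P3 lam A B) B = sl A B.
Proof. intros H. unfold sl, P3; simpl. field. lra. Qed.


Lemma LD0 A B u : fst A < fst B -> lin A (P1 lam A B) u = lin A B u.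
Proof. intros H. unfold lin, P1; simpl. field. lra. Qed.
Lemma LD3 A B u : fst A < fst B -> lin (P3 lam A B) B u = lin A B u.
Proof. intros H. unfold lin, P3; simpl. field. lra. Qed.
Lemma LD1 A B u : fst A < fst B -> lin (P1 lam A B) (P2 lam A B) u - lin A B u =
  6 * lam * sqrt (1 + sl A B ^ 2) * (u - fst (P1 lam A B)).
Proof. intros H. unfold lin, sl, P1, P2; simpl. field. lra. Qed.
Lemma LD2 A B u : fst A < fst B -> lin (P2 lam A B) (P3 lam A B) u - lin A B u =
  lam * (fst B - fst A) * sqrt (1 + sl A B ^ 2) - 6 * lam * sqrt (1 + sl A B ^ 2) * (u - fst (P2 lam A B)).
Proof. intros H. unfold lin, sl, P2, P3; simpl. field. lra. Qed.

Lemma fstQ_lt A B i : fst A < fst B -> (i < 4)%nat -> fst (Q lam A B i) < fst (Q lam A B (S i)).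
Proof.
  intros H Hi. destruct i as [|[|[|[|i]]]]; simpl Q; try lia;
  rewrite ?fst_P1, ?fst_P2, ?fst_P3; lra.
Qed.

Lemma CompInterp k A B i u : fst A < fst B -> (i < 4)%nat ->
  fst (Q lam A B i) <= u <= fst (Q lam A B (S i)) ->
  interp (RR lam (S k) [A;B]) u = interp (RR lam k [Q lam A B i; Q lam A B (S i)]) u.
Proof.
  intros H Hi Hu. destruct (RR_head2 lam k (Q lam A B i) (Q lam A B (S i)) []) as [t [T E]].
  apply (Sub _ _ (Q lam A B i) t T).
  - apply AS_RR; auto.
  - intros p q Ha. eapply comp_adj_back; eauto.
  - auto.
  - rewrite RR_last. simpl. auto.
Qed.

Definition Kc := 6 / (5 - 6 * lam).

Lemma Kc_pos : 0 < Kc.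
Proof. unfold Kc. apply Rdiv_lt_0_compat; lra. Qed.

Lemma Kc_ineq : Kc * (1 + 6 * lam) / 6 + lam <= Kc.
Proof. assert (Kc * (5 - 6*lam) = 6) by (unfold Kc; field; lra). nra. Qed.

Lemma Dev k : forall A B u, fst A < fst B -> fst A <= u <= fst B ->
  Rabs (interp (RR lam k [A;B]) u - lin A B u) <= Kc * (fst B - fst A) * (1 + Rabs (sl A B)).
Proof.
  pose proof Kc_pos as HK. pose proof Kc_ineq as HKi.
  induction k; intros A B u Hab Hu.
  - change (RR lam 0 [A;B]) with [A;B]. rewrite interp_cons2. destruct (Rle_dec u (fst B)); [|lra]. fold (lin A B u).
    rewrite Rminus_diag, Rabs_R0. pose proof (Rabs_pos (sl A B)). 
    apply Rmult_le_pos; [|lra]. apply Rmult_le_pos; lra.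
  - set (l := fst B - fst A). set (m := sl A B).
    pose proof (sqrt_facts m) as [[Hs1 Hs2] Hs3]. set (s := sqrt (1 + m ^ 2)) in *.
    pose proof (Rabs_pos m).
    assert (Hl : 0 < l) by (unfold l; lra).
    assert (HX : 0 <= l * (1 + Rabs m)) by nra.
    destruct (Rle_dec u (fst (P1 lam A B))) as [H1|H1].
    { rewrite (CompInterp k A B 0 u) by (first [lia | simpl Q; lra]).
      simpl Q. rewrite <- (LD0 A B u) by auto.
      eapply Rle_trans. apply IHk. rewrite fst_P1; lra. rewrite fst_P1 in *; lra.
      rewrite sl_Q0, fst_P1 by auto. fold m. replace (fst A + (fst B - fst A) / 3 - fst A) with (l/3) by (unfold l; field).
      nra. }
    destruct (Rle_dec u (fst (P2 lam A B))) as [H2|H2].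
    { rewrite (CompInterp k A B 1 u) by (first [lia | simpl Q; lra]).
      simpl Q.
      replace (interp (RR lam k [P1 lam A B; P2 lam A B]) u - lin A B u) with
        ((interp (RR lam k [P1 lam A B; P2 lam A B]) u - lin (P1 lam A B) (P2 lam A B) u) +
         (lin (P1 lam A B) (P2 lam A B) u - lin A B u)) by ring.
      eapply Rle_trans. apply Rabs_triang.
      assert (HI := IHk (P1 lam A B) (P2 lam A B) u ltac:(rewrite fst_P1, fst_P2; lra) ltac:(lra)).
      rewrite sl_Q1, fst_P1, fst_P2 in HI by auto. fold m s in HI.
      replace (fst A + (fst B - fst A) / 2 - (fst A + (fst B - fst A) / 3)) with (l/6) in HI by (unfold l; field).
      rewrite LD1 by auto. fold m s.
      assert (Hm1 : Rabs (m + 6 * lam * s) <= Rabs m + 6 * lam * s).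
      { eapply Rle_trans. apply Rabs_triang. rewrite (Rabs_pos_eq (6*lam*s)) by nra. lra. }
      rewrite fst_P1 in *. rewrite fst_P2 in H2.
      assert (0 <= u - (fst A + (fst B - fst A) / 3) <= l / 6) by (unfold l; lra).
      rewrite (Rabs_pos_eq (6 * lam * s * _)) by (apply Rmult_le_pos; [nra|lra]).
      assert (1 + Rabs (m + 6 * lam * s) <= (1 + 6 * lam) * (1 + Rabs m)) by nra.
      assert (0 <= Kc * (l / 6)) by nra.
      assert (Kc * (l / 6) * (1 + Rabs (m + 6 * lam * s)) <= Kc * (l/6) * (1 + 6 * lam) * (1 + Rabs m)).
      { rewrite (Rmult_assoc (Kc * (l/6)) (1 + 6 * lam)). apply Rmult_le_compat_l; auto. }
      assert (6 * lam * s * (u - (fst A + (fst B - fst A) / 3)) <= 6 * lam * s * (l / 6))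
        by (apply Rmult_le_compat_l; [nra|lra]).
      assert (lam * s * l <= lam * (1 + Rabs m) * l) by (apply Rmult_le_compat_r; [lra|apply Rmult_le_compat_l; lra]).
      assert (6 * lam * s * (u - (fst A + (fst B - fst A) / 3)) <= lam * l * (1 + Rabs m)) by lra.
      assert (Kc * (l / 6) * (1 + 6 * lam) * (1 + Rabs m) + lam * l * (1 + Rabs m) <= Kc * l * (1 + Rabs m)).
      { replace (Kc * (l / 6) * (1 + 6 * lam) * (1 + Rabs m) + lam * l * (1 + Rabs m)) with
          ((Kc * (1 + 6 * lam) / 6 + lam) * (l * (1 + Rabs m))) by field.
        replace (Kc * l * (1 + Rabs m)) with (Kc * (l * (1 + Rabs m))) by ring.
        apply Rmult_le_compat_r; auto. }
      lra. }
    destruct (Rle_dec u (fst (P3 lam A B))) as [H3|H3].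
    { rewrite (CompInterp k A B 2 u) by (first [lia | simpl Q; lra]).
      simpl Q.
      replace (interp (RR lam k [P2 lam A B; P3 lam A B]) u - lin A B u) with
        ((interp (RR lam k [P2 lam A B; P3 lam A B]) u - lin (P2 lam A B) (P3 lam A B) u) +
         (lin (P2 lam A B) (P3 lam A B) u - lin A B u)) by ring.
      eapply Rle_trans. apply Rabs_triang.
      assert (HI := IHk (P2 lam A B) (P3 lam A B) u ltac:(rewrite fst_P2, fst_P3; lra) ltac:(lra)).
      rewrite sl_Q2, fst_P2, fst_P3 in HI by auto. fold m s in HI.
      replace (fst A + 2 * (fst B - fst A) / 3 - (fst A + (fst B - fst A) / 2)) with (l/6) in HI by (unfold l; field).
      rewrite LD2 by auto. fold m s l.
      assert (Hm1 : Rabs (m - 6 * lam * s) <= Rabs m + 6 * lam * s).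
      { unfold Rminus. eapply Rle_trans. apply Rabs_triang. rewrite Rabs_Ropp, (Rabs_pos_eq (6*lam*s)) by nra. lra. }
      rewrite fst_P2 in *. rewrite fst_P3 in H3.
      assert (0 <= u - (fst A + (fst B - fst A) / 2) <= l / 6) by (unfold l; lra).
      assert (6 * lam * s * (u - (fst A + (fst B - fst A) / 2)) <= 6 * lam * s * (l / 6))
        by (apply Rmult_le_compat_l; [nra|lra]).
      assert (0 <= 6 * lam * s * (u - (fst A + (fst B - fst A) / 2)))
        by (apply Rmult_le_pos; [nra|lra]).
      rewrite (Rabs_pos_eq (lam * l * s - _)) by lra.
      assert (1 + Rabs (m - 6 * lam * s) <= (1 + 6 * lam) * (1 + Rabs m)) by nra.
      assert (0 <= Kc * (l / 6)) by nra.
      assert (Kc * (l / 6) * (1 + Rabs (m - 6 * lam * s)) <= Kc * (l/6) * (1 + 6 * lam) * (1 + Rabs m)).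
      { rewrite (Rmult_assoc (Kc * (l/6)) (1 + 6 * lam)). apply Rmult_le_compat_l; auto. }
      assert (lam * s * l <= lam * (1 + Rabs m) * l) by (apply Rmult_le_compat_r; [lra|apply Rmult_le_compat_l; lra]).
      assert (Kc * (l / 6) * (1 + 6 * lam) * (1 + Rabs m) + lam * l * (1 + Rabs m) <= Kc * l * (1 + Rabs m)).
      { replace (Kc * (l / 6) * (1 + 6 * lam) * (1 + Rabs m) + lam * l * (1 + Rabs m)) with
          ((Kc * (1 + 6 * lam) / 6 + lam) * (l * (1 + Rabs m))) by field.
        replace (Kc * l * (1 + Rabs m)) with (Kc * (l * (1 + Rabs m))) by ring.
        apply Rmult_le_compat_r; auto. }
      lra. }
    { rewrite (CompInterp k A B 3 u) by (first [lia | simpl Q; rewrite ?fst_P3 in *; lra]).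
      simpl Q. rewrite <- (LD3 A B u) by auto.
      eapply Rle_trans. apply IHk. rewrite fst_P3; lra. rewrite fst_P3 in *; lra.
      rewrite sl_Q3, fst_P3 by auto. fold m. replace (fst B - (fst A + 2 * (fst B - fst A) / 3)) with (l/3) by (unfold l; field).
      nra. }
Qed.

End S.

Section S.
Variable lam : R.
Hypothesis Hlam : 1/6 < lam < 5/6.

Definition cC := 6 + 12 / (6 * lam - 1).
Definition Comp m m' := Rabs m' <= cC * (1 + Rabs m) /\ Rabs m <= cC * (1 + Rabs m').

Lemma Comp_sym m m' : Comp m m' -> Comp m' m.
Proof. unfold Comp; tauto. Qed.

Lemma comp_core m sg : (sg = 1 \/ sg = -1) ->
  let m1 := m + sg * (6 * lam * sqrt (1 + m ^ 2)) in
  Rabs m1 <= 6 * (1 + Rabs m) /\ (6 * lam - 1) * (1 + Rabs m) <= 2 * Rabs m1.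
Proof.
  intros Hsg m1. pose proof (sqrt_facts m) as [[Hs1 Hs2] Hs3]. set (s := sqrt (1 + m^2)) in *.
  pose proof (Rabs_pos m).
  assert (Hr : Rabs (sg * (6 * lam * s)) = 6 * lam * s).
  { rewrite Rabs_mult. destruct Hsg as [->| ->]; rewrite ?Rabs_R1, ?Rabs_m1, Rabs_pos_eq by nra; ring. }
  split.
  - unfold m1. eapply Rle_trans. apply Rabs_triang. rewrite Hr. nra.
  - assert (Rabs (sg * (6 * lam * s)) - Rabs m <= Rabs m1).
    { unfold m1. replace (m + sg * (6*lam*s)) with (sg * (6*lam*s) - (- m)) by ring.
      rewrite <- (Rabs_Ropp m) at 1. apply Rabs_triang_inv. }
    rewrite Hr in H0. nra.
Qed.

Lemma cC_facts : 6 <= cC /\ forall a b, 0 <= a -> 0 <= b -> (6 * lam - 1) * a <= 2 * b -> 6 * a <= cC * b.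
Proof.
  unfold cC. assert (Ht : 0 < 6 * lam - 1) by lra. set (t := 6 * lam - 1) in *.
  assert (0 < 12 / t) by (apply Rdiv_lt_0_compat; lra).
  split. lra. intros a b Ha Hb Hab.
  assert (a <= 2 * b / t). { apply (Rmult_le_reg_l t); auto. field_simplify; lra. }
  assert (6 * a <= 12 / t * b) by (unfold Rdiv in *; nra).
  nra.
Qed.

Lemma comp_m_m1 m sg : (sg = 1 \/ sg = -1) -> Comp m (m + sg * (6 * lam * sqrt (1 + m ^ 2))).
Proof.
  intros Hsg. destruct (comp_core m sg Hsg) as [H1 H2]. set (m1 := m + _) in *.
  destruct cC_facts as [Hc Hf]. pose proof (Rabs_pos m). pose proof (Rabs_pos m1).
  split. nra.
  assert (6 * (1 + Rabs m) <= cC * (Rabs m1)) by (apply Hf; lra). nra.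
Qed.

Lemma comp_m1_m2 m : Comp (m + 1 * (6 * lam * sqrt (1 + m ^ 2))) (m + -1 * (6 * lam * sqrt (1 + m ^ 2))).
Proof.
  destruct (comp_core m 1 ltac:(auto)) as [H1 H2]. destruct (comp_core m (-1) ltac:(auto)) as [H3 H4].
  set (m1 := m + 1 * _) in *. set (m2 := m + -1 * _) in *.
  destruct cC_facts as [Hc Hf]. pose proof (Rabs_pos m). pose proof (Rabs_pos m1). pose proof (Rabs_pos m2).
  assert (6 * (1 + Rabs m) <= cC * (Rabs m1)) by (apply Hf; lra).
  assert (6 * (1 + Rabs m) <= cC * (Rabs m2)) by (apply Hf; lra).
  split; nra.
Qed.

Definition TripOK (o p q : R*R) :=
  fst q - fst p <= 2 * (fst p - fst o) /\ fst p - fst o <= 2 * (fst q - fst p) /\ Comp (sl o p) (sl p q).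

Lemma EndPairs k : forall A B p q, fst A < fst B -> Adj (RR lam k [A;B]) p q ->
  (fst q = fst B -> fst q - fst p = (fst B - fst A) / 3 ^ k /\ sl p q = sl A B) /\
  (fst p = fst A -> fst q - fst p = (fst B - fst A) / 3 ^ k /\ sl p q = sl A B).
Proof.
  induction k; intros A B p q Hab H.
  - change (RR lam 0 [A;B]) with [A;B] in H. inversion H; subst.
    simpl. split; intros; split; auto; field. inversion H4. inversion H5.
  - destruct (comp_adj _ _ _ _ _ _ H) as [i [Hi Ha]].
    pose proof (fstQ_lt lam A B i Hab Hi) as Hlt.
    destruct (Rep _ _ _ _ _ _ Hlt Ha) as [c [d [G [E1 E2]]]]. apply Gen_bounds in G.
    destruct (IHk _ _ _ _ Hlt Ha) as [IH1 IH2].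
    destruct i as [|[|[|[|i]]]]; try lia; simpl Q in *; rewrite ?fst_P1, ?fst_P2, ?fst_P3 in *.
    + split; intros Hq.
      * exfalso. assert (fst q <= fst A + (fst B - fst A) / 3).
        { rewrite E2. replace (fst A + (fst B - fst A) / 3) with
            (fst A + (fst A + (fst B - fst A) / 3 - fst A) * 1) at 2 by ring.
          apply Rplus_le_compat_l, Rmult_le_compat_l; lra. } lra.
      * destruct (IH2 Hq) as [IHa IHb]. rewrite IHb, sl_Q0 by auto. split; auto.
        rewrite IHa. simpl. field; apply pow_nonzero; lra.
    + split; intros Hq; exfalso.
      * assert (fst q <= fst A + (fst B - fst A) / 2).
        { rewrite E2. replace (fst A + (fst B - fst A) / 2) with
            (fst A + (fst B - fst A) / 3 + (fst A + (fst B - fst A) / 2 - (fst A + (fst B - fst A) / 3)) * 1) at 2 by ring.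
          apply Rplus_le_compat_l, Rmult_le_compat_l; lra. } lra.
      * assert (fst A + (fst B - fst A) / 3 <= fst p).
        { rewrite E1. rewrite <- (Rplus_0_r (_ + _ / 3)) at 1. apply Rplus_le_compat_l, Rmult_le_pos; lra. } lra.
    + split; intros Hq; exfalso.
      * assert (fst q <= fst A + 2 * (fst B - fst A) / 3).
        { rewrite E2. replace (fst A + 2 * (fst B - fst A) / 3) with
            (fst A + (fst B - fst A) / 2 + (fst A + 2 * (fst B - fst A) / 3 - (fst A + (fst B - fst A) / 2)) * 1) at 2 by ring.
          apply Rplus_le_compat_l, Rmult_le_compat_l; lra. } lra.
      * assert (fst A + (fst B - fst A) / 2 <= fst p).
        { rewrite E1. rewrite <- (Rplus_0_r (_ + _ / 2)) at 1. apply Rplus_le_compat_l, Rmult_le_pos; lra. } lra.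
    + split; intros Hq.
      * destruct (IH1 Hq) as [IHa IHb]. rewrite IHb, sl_Q3 by auto. split; auto.
        rewrite IHa. simpl. field; apply pow_nonzero; lra.
      * exfalso. assert (fst A + 2 * (fst B - fst A) / 3 <= fst p).
        { rewrite E1. rewrite <- (Rplus_0_r (_ + 2 * _ / 3)) at 1. apply Rplus_le_compat_l, Rmult_le_pos; lra. } lra.
Qed.


Lemma Trip k : forall A B o p q, fst A < fst B -> Adj3 (RR lam k [A;B]) o p q -> TripOK o p q.
Proof.
  induction k; intros A B o p q Hab H.
  - change (RR lam 0 [A;B]) with [A;B] in H. destruct (Adj3_cons_inv _ _ _ _ _ H) as [[_ [l E]]|H1]; [discriminate|]. destruct (Adj3_cons_inv _ _ _ _ _ H1) as [[_ [l E]]|H2]; [discriminate|]. inversion H2.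
  - destruct (comp_adj3 _ _ _ _ _ _ _ H) as [[i [Hi Ha]]|[i [Hi [Ep [Ha Hb]]]]].
    + eapply IHk; [|exact Ha]. apply fstQ_lt; auto.
    + assert (Hl1 := fstQ_lt lam A B i Hab ltac:(lia)).
      assert (Hl2 := fstQ_lt lam A B (S i) Hab ltac:(lia)).
      destruct (EndPairs k _ _ _ _ Hl1 Ha) as [Ea _].
      destruct (EndPairs k _ _ _ _ Hl2 Hb) as [_ Eb].
      destruct (Ea ltac:(rewrite Ep; auto)) as [La Sa].
      destruct (Eb ltac:(rewrite Ep; auto)) as [Lb Sb].
      unfold TripOK. rewrite La, Lb, Sa, Sb.
      assert (H3 : 0 < 3 ^ k) by (apply pow_lt; lra).
      pose proof (sl_Q0 lam A B Hab). pose proof (sl_Q1 lam A B Hab).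
      pose proof (sl_Q2 lam A B Hab). pose proof (sl_Q3 lam A B Hab).
      set (m := sl A B) in *. set (s := sqrt (1 + m ^ 2)) in *.
      assert (E1 : m + 6 * lam * s = m + 1 * (6 * lam * s)) by ring.
      assert (E2 : m - 6 * lam * s = m + -1 * (6 * lam * s)) by ring.
      destruct i as [|[|[|i]]]; try lia; cbv beta iota delta [Q]; rewrite ?fst_P1, ?fst_P2, ?fst_P3.
      * rewrite H0, H1. split; [|split].
        1,2: unfold Rdiv; assert (0 < / 3 ^ k) by (apply Rinv_0_lt_compat; auto); nra.
        rewrite E1. apply comp_m_m1; auto.
      * rewrite H1, H2. split; [|split].
        1,2: unfold Rdiv; assert (0 < / 3 ^ k) by (apply Rinv_0_lt_compat; auto); nra.
        rewrite E1, E2. apply comp_m1_m2.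
      * rewrite H2, H4. split; [|split].
        1,2: unfold Rdiv; assert (0 < / 3 ^ k) by (apply Rinv_0_lt_compat; auto); nra.
        rewrite E2. apply Comp_sym, comp_m_m1; auto.
Qed.

End S.

Lemma nodes_RR lam n : nodes lam n = RR lam n [(0,0);(1,0)].
Proof. induction n; auto. change (nodes lam (S n)) with (refine lam (nodes lam n)).
  rewrite IHn. unfold RR. rewrite iter_S. reflexivity. Qed.

Lemma nodes_add lam k n : nodes lam (k + n) = RR lam k (nodes lam n).
Proof. induction k; auto. change (nodes lam (S k + n)) with (refine lam (nodes lam (k + n))).
  rewrite IHk. unfold RR. rewrite iter_S. reflexivity. Qed.

Lemma AS_nodes lam n : AS (nodes lam n).
Proof. rewrite nodes_RR. apply AS_RR. simpl; lra. Qed.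

Lemma Adj_RR_sub lam k L p q : Adj L p q -> forall p' q', Adj (RR lam k [p;q]) p' q' -> Adj (RR lam k L) p' q'.
Proof.
  induction 1; intros p' q' HH.
  - change (p :: q :: l) with ((p :: [q]) ++ l).
    rewrite RR_glue with (y := q) by reflexivity.
    destruct (RR2 lam k p q) as [T [E _]]. rewrite E in *. apply (Adj_app_l (_::_)); auto.
  - destruct l as [|h l]. inversion H.
    change (r :: h :: l) with ((r :: [h]) ++ l).
    rewrite RR_glue with (y := h) by reflexivity.
    destruct (RR2 lam k r h) as [T [E [El _]]]. rewrite E.
    destruct (RR_head lam k h l) as [T' E']. 
    rewrite E'. simpl tl. apply (Adj_glue_r r T h T'); auto. rewrite <- E'. apply IHAdj; auto.
Qed.

Section S.
Variable lam : R.
Hypothesis Hlam : 1/6 < lam < 5/6.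

Lemma FnBound n p q u : Adj (nodes lam n) p q -> fst p <= u <= fst q ->
  forall N, (n <= N)%nat -> Rabs (Fn lam N u - lin p q u) <= Kc lam * (fst q - fst p) * (1 + Rabs (sl p q)).
Proof.
  intros Ha Hu N HN. unfold Fn. replace N with ((N - n) + n)%nat by lia.
  rewrite nodes_add. set (k := (N - n)%nat).
  assert (Hpq : fst p < fst q) by (apply (AS_nodes lam n); auto).
  destruct (RR_head2 lam k p q []) as [t [T E]].
  rewrite (Sub _ (RR lam k [p;q]) p t T u).
  - apply Dev; auto.
  - rewrite <- nodes_add. apply AS_nodes.
  - intros p' q' H'. eapply Adj_RR_sub; eauto.
  - auto.
  - rewrite RR_last. simpl. auto.
Qed.

Lemma FlamBound n p q u : Adj (nodes lam n) p q -> fst p <= u <= fst q ->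
  Rabs (Flam lam u - lin p q u) <= Kc lam * (fst q - fst p) * (1 + Rabs (sl p q)).
Proof.
  intros Ha Hu. set (B := Kc lam * (fst q - fst p) * (1 + Rabs (sl p q))).
  set (c := lin p q u).
  assert (H1 : Rbar_le (Lim_seq (fun N => Fn lam N u)) (Lim_seq (fun _ => c + B))).
  { apply Lim_seq_le_loc. exists n. intros N HN.
    pose proof (FnBound n p q u Ha Hu N HN). apply Rabs_le_between in H. fold B c in H. lra. }
  assert (H2 : Rbar_le (Lim_seq (fun _ => c - B)) (Lim_seq (fun N => Fn lam N u))).
  { apply Lim_seq_le_loc. exists n. intros N HN.
    pose proof (FnBound n p q u Ha Hu N HN). apply Rabs_le_between in H. fold B c in H. lra. }
  rewrite Lim_seq_const in H1, H2. unfold Flam.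
  destruct (Lim_seq (fun N => Fn lam N u)) as [r| |]; simpl in H1, H2; try contradiction.
  simpl. apply Rabs_le_between. fold c. lra.
Qed.

End S.

Lemma Adj3_Adj L o p q : Adj3 L o p q -> Adj L o p /\ Adj L p q.
Proof. induction 1. split; constructor; constructor. destruct IHAdj3; split; constructor; auto. Qed.

Lemma Adj_pred L p q : Adj L p q -> (exists l, L = p :: q :: l) \/ exists o, Adj3 L o p q.
Proof.
  induction 1. left; eauto.
  destruct IHAdj as [[l' E]|[o Ho]]. subst. right. exists r. constructor.
  right. exists o. constructor; auto.
Qed.

Lemma Adj_succ L p q : Adj L p q -> last L (0,0) = q \/ exists r, Adj3 L p q r.
Proof.
  induction 1.
  - destruct l as [|r l]. left; reflexivity. right. exists r. constructor.
  - destruct IHAdj as [E|[r' Hr]].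
    + left. destruct l. inversion H. rewrite <- E. reflexivity.
    + right. exists r'. constructor; auto.
Qed.

Lemma lin_diff p q x y : lin p q x - lin p q y = sl p q * (x - y).
Proof. unfold lin, sl. ring. Qed.

Lemma mul_mono a b c d : 0 <= a <= b -> 0 <= c <= d -> a * c <= b * d.
Proof. intros. apply Rmult_le_compat; lra. Qed.

Section S.
Variable lam : R.
Hypothesis Hlam : 1/6 < lam < 5/6.

Lemma side_bound n o p q x y :
  Adj (nodes lam n) p q -> Adj (nodes lam n) o p -> TripOK lam o p q ->
  fst p <= x <= fst q -> fst o <= y <= fst p ->
  fst q - fst p <= 12 * (x - y) ->
  Rabs (Flam lam x - Flam lam y) <=
    (24 * Kc lam + 1 + 48 * Kc lam * (1 + cC lam) + cC lam) * (1 + Rabs (sl p q)) * (x - y).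
Proof.
  intros H1 H2 [T1 [T2 [C1 C2]]] Hx Hy Hl.
  pose proof (Kc_pos lam Hlam) as HK. destruct (cC_facts lam Hlam) as [Hc _].
  set (m := sl p q) in *. set (m' := sl o p) in *. set (a := 1 + Rabs m).
  pose proof (Rabs_pos m). pose proof (Rabs_pos m').
  assert (Hpq : fst p < fst q) by (apply (AS_nodes lam n); auto).
  assert (Hop : fst o < fst p) by (apply (AS_nodes lam n); auto).
  set (D := x - y). assert (HD : 0 <= D) by (unfold D; lra).
  pose proof (FlamBound lam Hlam n p q x H1 Hx) as B1.
  pose proof (FlamBound lam Hlam n p q (fst p) H1 ltac:(lra)) as B2.
  pose proof (FlamBound lam Hlam n o p (fst p) H2 ltac:(lra)) as B3.
  pose proof (FlamBound lam Hlam n o p y H2 Hy) as B4.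
  fold m m' in B1, B2, B3, B4.
  replace (Flam lam x - Flam lam y) with
    ((Flam lam x - lin p q x) + (lin p q x - lin p q (fst p)) + (lin p q (fst p) - Flam lam (fst p))
     + (Flam lam (fst p) - lin o p (fst p)) + (lin o p (fst p) - lin o p y) + (lin o p y - Flam lam y)) by ring.
  rewrite !lin_diff. fold m m'.
  assert (E1 : Rabs (m * (x - fst p)) <= a * D).
  { rewrite Rabs_mult, (Rabs_pos_eq (x - fst p)) by lra. apply mul_mono; unfold a, D; lra. }
  assert (E2 : Rabs (m' * (fst p - y)) <= cC lam * a * D).
  { rewrite Rabs_mult, (Rabs_pos_eq (fst p - y)) by lra. apply mul_mono. unfold a; lra. unfold D; lra. }
  assert (E3 : Kc lam * (fst q - fst p) * a <= 12 * Kc lam * a * D).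
  { replace (12 * Kc lam * a * D) with (Kc lam * (12 * D) * a) by ring.
    apply Rmult_le_compat_r. unfold a; lra. apply Rmult_le_compat_l; unfold D in *; lra. }
  assert (E4 : Kc lam * (fst p - fst o) * (1 + Rabs m') <= 24 * Kc lam * (1 + cC lam) * a * D).
  { replace (24 * Kc lam * (1 + cC lam) * a * D) with (Kc lam * ((24 * D) * ((1 + cC lam) * a))) by ring.
    rewrite Rmult_assoc. apply Rmult_le_compat_l. lra. apply mul_mono. unfold D in *; lra.
    split. lra. unfold a. nra. }
  rewrite Rabs_minus_sym in B2, B4.
  assert (Hsum : Rabs (Flam lam x - lin p q x + m * (x - fst p) + (lin p q (fst p) - Flam lam (fst p)) +
     (Flam lam (fst p) - lin o p (fst p)) + m' * (fst p - y) + (lin o p y - Flam lam y)) <=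
     Rabs (Flam lam x - lin p q x) + Rabs (m * (x - fst p)) + Rabs (lin p q (fst p) - Flam lam (fst p)) +
     Rabs (Flam lam (fst p) - lin o p (fst p)) + Rabs (m' * (fst p - y)) + Rabs (lin o p y - Flam lam y)).
  { repeat (eapply Rle_trans; [apply Rabs_triang|apply Rplus_le_compat_r]). apply Rle_refl. }
  eapply Rle_trans. exact Hsum. fold a in B1, B2, B3, B4.
  assert (0 <= Kc lam * cC lam * a * D) by (apply Rmult_le_pos; [|auto]; apply Rmult_le_pos; [nra|unfold a; lra]).
  assert (0 <= Kc lam * a * D) by (apply Rmult_le_pos; [|auto]; apply Rmult_le_pos; [nra|unfold a; lra]).
  assert (0 <= cC lam * a * D) by (apply Rmult_le_pos; [|auto]; apply Rmult_le_pos; [nra|unfold a; lra]).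
  assert (0 <= a * D) by (apply Rmult_le_pos; [unfold a; lra|auto]).
  fold D. nra.
Qed.


Lemma side_bound2 n p q r x y :
  Adj (nodes lam n) p q -> Adj (nodes lam n) q r -> TripOK lam p q r ->
  fst p <= x <= fst q -> fst q <= y <= fst r ->
  fst q - fst p <= 12 * (y - x) ->
  Rabs (Flam lam x - Flam lam y) <=
    (24 * Kc lam + 1 + 48 * Kc lam * (1 + cC lam) + cC lam) * (1 + Rabs (sl p q)) * (y - x).
Proof.
  intros H1 H2 [T1 [T2 [C1 C2]]] Hx Hy Hl.
  pose proof (Kc_pos lam Hlam) as HK. destruct (cC_facts lam Hlam) as [Hc _].
  set (m := sl p q) in *. set (m' := sl q r) in *. set (a := 1 + Rabs m).
  pose proof (Rabs_pos m). pose proof (Rabs_pos m').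
  assert (Hpq : fst p < fst q) by (apply (AS_nodes lam n); auto).
  assert (Hop : fst q < fst r) by (apply (AS_nodes lam n); auto).
  set (D := y - x). assert (HD : 0 <= D) by (unfold D; lra).
  pose proof (FlamBound lam Hlam n p q x H1 Hx) as B1.
  pose proof (FlamBound lam Hlam n p q (fst q) H1 ltac:(lra)) as B2.
  pose proof (FlamBound lam Hlam n q r (fst q) H2 ltac:(lra)) as B3.
  pose proof (FlamBound lam Hlam n q r y H2 Hy) as B4.
  fold m m' in B1, B2, B3, B4.
  replace (Flam lam x - Flam lam y) with
    ((Flam lam x - lin p q x) + (lin p q x - lin p q (fst q)) + (lin p q (fst q) - Flam lam (fst q))
     + (Flam lam (fst q) - lin q r (fst q)) + (lin q r (fst q) - lin q r y) + (lin q r y - Flam lam y)) by ring.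
  rewrite !lin_diff. fold m m'.
  assert (E1 : Rabs (m * (x - fst q)) <= a * D).
  { rewrite Rabs_mult, Rabs_minus_sym, (Rabs_pos_eq (fst q - x)) by lra. apply mul_mono; unfold a, D; lra. }
  assert (E2 : Rabs (m' * (fst q - y)) <= cC lam * a * D).
  { rewrite Rabs_mult, Rabs_minus_sym, (Rabs_pos_eq (y - fst q)) by lra. apply mul_mono. unfold a; lra. unfold D; lra. }
  assert (E3 : Kc lam * (fst q - fst p) * a <= 12 * Kc lam * a * D).
  { replace (12 * Kc lam * a * D) with (Kc lam * (12 * D) * a) by ring.
    apply Rmult_le_compat_r. unfold a; lra. apply Rmult_le_compat_l; unfold D in *; lra. }
  assert (E4 : Kc lam * (fst r - fst q) * (1 + Rabs m') <= 24 * Kc lam * (1 + cC lam) * a * D).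
  { replace (24 * Kc lam * (1 + cC lam) * a * D) with (Kc lam * ((24 * D) * ((1 + cC lam) * a))) by ring.
    rewrite Rmult_assoc. apply Rmult_le_compat_l. lra. apply mul_mono. unfold D in *; lra.
    split. lra. unfold a. nra. }
  rewrite Rabs_minus_sym in B2, B4.
  assert (Hsum : Rabs (Flam lam x - lin p q x + m * (x - fst q) + (lin p q (fst q) - Flam lam (fst q)) +
     (Flam lam (fst q) - lin q r (fst q)) + m' * (fst q - y) + (lin q r y - Flam lam y)) <=
     Rabs (Flam lam x - lin p q x) + Rabs (m * (x - fst q)) + Rabs (lin p q (fst q) - Flam lam (fst q)) +
     Rabs (Flam lam (fst q) - lin q r (fst q)) + Rabs (m' * (fst q - y)) + Rabs (lin q r y - Flam lam y)).
  { repeat (eapply Rle_trans; [apply Rabs_triang|apply Rplus_le_compat_r]). apply Rle_refl. }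
  eapply Rle_trans. exact Hsum. fold a in B1, B2, B3, B4.
  assert (0 <= Kc lam * cC lam * a * D) by (apply Rmult_le_pos; [|auto]; apply Rmult_le_pos; [nra|unfold a; lra]).
  assert (0 <= Kc lam * a * D) by (apply Rmult_le_pos; [|auto]; apply Rmult_le_pos; [nra|unfold a; lra]).
  assert (0 <= cC lam * a * D) by (apply Rmult_le_pos; [|auto]; apply Rmult_le_pos; [nra|unfold a; lra]).
  assert (0 <= a * D) by (apply Rmult_le_pos; [unfold a; lra|auto]).
  fold D. nra.
Qed.

Lemma inner_bound n p q x y :
  Adj (nodes lam n) p q -> fst p <= x <= fst q -> fst p <= y <= fst q ->
  fst q - fst p <= 12 * Rabs (x - y) ->
  Rabs (Flam lam x - Flam lam y) <= (24 * Kc lam + 1) * (1 + Rabs (sl p q)) * Rabs (x - y).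
Proof.
  intros H1 Hx Hy Hl.
  pose proof (Kc_pos lam Hlam) as HK.
  set (m := sl p q) in *. set (a := 1 + Rabs m).
  pose proof (Rabs_pos m). set (D := Rabs (x - y)) in *. pose proof (Rabs_pos (x - y)).
  pose proof (FlamBound lam Hlam n p q x H1 Hx) as B1.
  pose proof (FlamBound lam Hlam n p q y H1 Hy) as B2. fold m a in B1, B2.
  replace (Flam lam x - Flam lam y) with
    ((Flam lam x - lin p q x) + (lin p q x - lin p q y) + (lin p q y - Flam lam y)) by ring.
  rewrite lin_diff. fold m. rewrite Rabs_minus_sym in B2.
  assert (E1 : Rabs (m * (x - y)) <= a * D) by (rewrite Rabs_mult; apply mul_mono; unfold a, D; lra).
  assert (E3 : Kc lam * (fst q - fst p) * a <= 12 * Kc lam * a * D).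
  { replace (12 * Kc lam * a * D) with (Kc lam * (12 * D) * a) by ring.
    apply Rmult_le_compat_r. unfold a; lra. apply Rmult_le_compat_l; lra. }
  assert (Hsum : Rabs (Flam lam x - lin p q x + m * (x - y) + (lin p q y - Flam lam y)) <=
    Rabs (Flam lam x - lin p q x) + Rabs (m * (x - y)) + Rabs (lin p q y - Flam lam y)).
  { repeat (eapply Rle_trans; [apply Rabs_triang|apply Rplus_le_compat_r]). apply Rle_refl. }
  eapply Rle_trans. exact Hsum. fold D. nra.
Qed.

End S.

Theorem proposition3p9 (lam : R) (Hlam : 1/6 < lam < 5/6) :
  exists C : R, 0 < C /\
    forall (n : nat) (x y : R),
      0 <= x <= 1 -> 0 <= y <= 1 -> ~ inE x ->
      ell x n / 12 <= Rabs (x - y) <= ell x n / 2 ->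
      Rabs (Flam lam x - Flam lam y) <= C * (Rabs (mslope lam n x) + 1) * Rabs (x - y).
Proof.
  pose proof (Kc_pos lam Hlam) as HK. destruct (cC_facts lam Hlam) as [Hc _].
  exists (24 * Kc lam + 1 + 48 * Kc lam * (1 + cC lam) + cC lam). split.
  { assert (0 <= Kc lam * (1 + cC lam)) by nra. lra. }
  intros n x y Hx Hy HE Hd.
  destruct (RR_head2 lam n (0,0) (1,0) []) as [t [T E]].
  assert (EL : last (nodes lam n) (0,0) = (1,0)) by (rewrite nodes_RR, RR_last; reflexivity).
  assert (EN : nodes lam n = (0,0) :: t :: T) by (rewrite nodes_RR; exact E).
  destruct (Ex_pair T (0,0) t x) as [p [q [Ha [Hpx [_ Hsl]]]]].
  { rewrite <- EN, EL. simpl. lra. }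
  rewrite <- EN in Ha, Hsl.
  assert (Hm : mslope lam n x = sl p q) by exact Hsl. rewrite Hm.
  assert (Ha' := Ha). rewrite nodes_RR in Ha'.
  destruct (Rep lam n (0,0) (1,0) p q ltac:(simpl; lra) Ha') as [c [d [G [E1 E2]]]].
  simpl in E1, E2.
  assert (Hell : d - c = ell x n) by (apply (Gen_ell n c d G); [lra|auto]).
  assert (Hlen : fst q - fst p = ell x n) by (rewrite E1, E2; lra).
  pose proof (Rabs_pos (sl p q)).
  rewrite (Rplus_comm (Rabs (sl p q)) 1).
  destruct (Rlt_dec y (fst p)) as [Hyp|Hyp].
  - destruct (Adj_pred _ _ _ Ha) as [[l El]|[o Ho]].
    { rewrite EN in El. injection El; intros; subst. simpl in Hyp. lra. }
    destruct (Adj3_Adj _ _ _ _ Ho) as [Hop _].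
    pose proof (Trip lam Hlam n (0,0) (1,0) o p q ltac:(simpl; lra) ltac:(rewrite <- nodes_RR; auto)) as HT.
    destruct HT as [T1 [T2 C]].
    assert (Hxy : Rabs (x - y) = x - y) by (apply Rabs_pos_eq; lra).
    rewrite Hxy in *.
    apply (side_bound lam Hlam n o p q x y Ha Hop (conj T1 (conj T2 C))); try lra.
  - destruct (Rlt_dec (fst q) y) as [Hyq|Hyq].
    + destruct (Adj_succ _ _ _ Ha) as [El|[r Hr]].
      { rewrite EL in El. subst. simpl in Hyq. lra. }
      destruct (Adj3_Adj _ _ _ _ Hr) as [_ Hqr].
      pose proof (Trip lam Hlam n (0,0) (1,0) p q r ltac:(simpl; lra) ltac:(rewrite <- nodes_RR; auto)) as HT.
      destruct HT as [T1 [T2 C]].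
      assert (Hxy : Rabs (x - y) = y - x) by (rewrite Rabs_minus_sym; apply Rabs_pos_eq; lra).
      rewrite Hxy in *.
      apply (side_bound2 lam Hlam n p q r x y Ha Hqr (conj T1 (conj T2 C))); try lra.
    + eapply Rle_trans. apply (inner_bound lam Hlam n p q x y Ha); lra.
      apply Rmult_le_compat_r. apply Rabs_pos. apply Rmult_le_compat_r. lra.
      assert (0 <= Kc lam * (1 + cC lam)) by nra. lra.
Qed.
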